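(* Let $p$ be a prime, let $n\geqslant 2$ be an integer, let $m\geqslant 1$ be an integer and let $k\geqslant 2$ be an integer not divisible by $p$. For positive integers $a,r$ let $w(a,r)=\frac{1}{r}\sum_{d\mid r}\mu(d)\,a^{r/d}$, where $\mu$ is the Möbius function. For $i=0,1,\dots,m$ define $$a_i = \frac{w(n,p^{m-i}k)^{p^i}}{p^i\, w(n,p^mk)}.$$ Then: (i) for $i=2,3,\dots,m-1$, we have $a_i/a_{i-1}\leqslant 1$; (ii) $a_1 \leqslant 2/(p^{m-1}k)^{p-1}$ and $a_m \leqslant 2/k^{p^m-1}$. *)

(* Defs.v *)
From mathcomp Require Import all_boot all_order all_algebra.
Set Implicit Arguments. Unset Strict Implicit. Unset Printing Implicit Defensive.
Import Order.TTheory GRing.Theory Num.Theory.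
Local Open Scope ring_scope.

Definition moebius (d : nat) : int :=
  if all (fun q => logn q d == 1%N) (primes d)
  then (-1) ^+ size (primes d) else 0.

Definition necklace_w (a r : nat) : rat :=
  (r%:R)^-1 * \sum_(d <- divisors r) (moebius d)%:~R * (a ^ (r %/ d))%:R.

Definition coef_a (p n m k i : nat) : rat :=
  (necklace_w n (p ^ (m - i) * k)) ^+ (p ^ i) /
  ((p ^ i)%:R * necklace_w n (p ^ m * k)).

(* Main.v *)
Require Import Defs.
From mathcomp Require Import all_boot all_order all_algebra.
From mathcomp Require Import zify ring lra.
Import Order.TTheory GRing.Theory Num.Theory.
Set Implicit Arguments. Unset Strict Implicit.
Local Open Scope ring_scope.

Lemma moeb1 : moebius 1 = 1.
Proof. by []. Qed.

Lemma moebp q : prime q -> moebius q = -1.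
Proof. by move=> pq; rewrite /moebius primes_prime //= logn_prime // eqxx. Qed.

Lemma moeb_bnd d : -1 <= (moebius d)%:~R :> rat /\ (moebius d)%:~R <= 1 :> rat.
Proof.
rewrite /moebius; case: ifP => _; last by rewrite /=; split; lra.
rewrite -signr_odd; case: (odd _); rewrite /= ?expr1 ?expr0; split; lra.
Qed.

Lemma divdiv r e : (0 < r)%N -> (e %| r)%N -> (r %/ (r %/ e) = e)%N.
Proof. by move=> r0 he; rewrite divnA // mulKn. Qed.

Definition Sv (n r : nat) : rat :=
  \sum_(d <- divisors r) (moebius d)%:~R * (n ^ (r %/ d))%:R.

Definition G n r e : rat := if (e %| r)%N then (moebius (r %/ e))%:~R * (n ^ e)%:R else 0.

Lemma Sv_range n r : (0 < r)%N -> Sv n r = \sum_(0 <= e < r.+1) G n r e.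
Proof.
move=> r0.
have pe : perm_eq (divisors r) [seq (r %/ e)%N | e <- divisors r].
  apply: uniq_perm; first exact: divisors_uniq.
    rewrite map_inj_in_uniq ?divisors_uniq // => x y.
    rewrite -!dvdn_divisors // => hx hy e.
    by rewrite -(divdiv r0 hx) e divdiv.
  move=> x; apply/idP/mapP.
    rewrite -dvdn_divisors // => hx; exists (r %/ x)%N; last by rewrite divdiv.
    by rewrite -dvdn_divisors // dvdn_div.
  by case=> y; rewrite -!dvdn_divisors // => hy ->; rewrite dvdn_div.
rewrite /Sv (perm_big _ pe) big_map.
have pe2 : perm_eq (divisors r) [seq e <- index_iota 0 r.+1 | (e %| r)%N].
  apply: uniq_perm; first exact: divisors_uniq.
    by rewrite filter_uniq // iota_uniq.
  move=> x; rewrite mem_filter mem_index_iota -dvdn_divisors //.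
  case hx: (x %| r)%N => //=; rewrite ltnS.
  by rewrite dvdn_leq.
rewrite (perm_big _ pe2) big_filter big_mkcond /=.
apply: eq_bigr => e _; rewrite /G; case: ifP => // he.
by rewrite divdiv.
Qed.

Lemma geom n E : (2 <= n)%N -> ((\sum_(0 <= e < E) n ^ e).+1 <= n ^ E)%N.
Proof.
move=> n2; have := predn_exp n E; rewrite big_mkord => h.
have p0 : (0 < n ^ E)%N by rewrite expn_gt0; lia.
rewrite -(prednK p0) ltnS h; apply: leq_pmull; lia.
Qed.

Lemma geomR n E : (2 <= n)%N ->
  \sum_(0 <= e < E) (n ^ e)%:R <= (n ^ E)%:R - 1 :> rat.
Proof.
move=> n2; rewrite -natr_sum lerBrDr natr1 ler_nat; exact: geom.
Qed.

Lemma Sv_lower0 n r : (2 <= n)%N -> (1 <= r)%N ->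
  (n ^ r)%:R - ((n ^ (r./2).+1)%:R - 1) <= Sv n r.
Proof.
move=> n2 r1; rewrite Sv_range //.
pose h := (r./2).+1.
pose l e : rat := if e == r then (n ^ r)%:R else if (e < h)%N then - (n ^ e)%:R else 0.
have hr : (h <= r)%N.
  have := odd_double_half r; rewrite -addnn /h; case: (odd r) => /=; lia.
apply: (@le_trans _ _ (\sum_(0 <= e < r.+1) l e)); last first.
  apply: ler_sum => e _; rewrite /G.
  case: ifP => he; rewrite /l.
    case: (e =P r) => [->|ne].
      by rewrite divnn r1 moeb1 mul1r.
    have eh : (e < h)%N.
      have e0 : (0 < e)%N by case: e he ne => //; rewrite dvd0n => /eqP; lia.
      have : (e < r)%N by rewrite ltn_neqAle; apply/andP; split; [apply/eqP | rewrite dvdn_leq].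
      move: he => /dvdnP [c hc] er.
      have c2 : (2 <= c)%N by move: er; rewrite hc; case: c hc => [|[|c]] //=; nia.
      rewrite /h; move: hc; rewrite -(odd_double_half r) => hc; nia.
    rewrite eh; have [hm _] := moeb_bnd (r %/ e).
    rewrite mulrC -mulrN1 ler_wpM2l //; exact: ler0n.
  case: (e =P r) => [er|_]; first by rewrite er dvdnn in he.
  by case: ifP => _ //; rewrite oppr_le0 ler0n.
rewrite (big_cat_nat (leq0n h)) /=; last by lia.
rewrite (@eq_big_nat _ _ _ 0 h _ (fun e => - (n ^ e)%:R)); last first.
  by move=> e /andP[_ eh]; rewrite /l eh; case: (e =P r) => // er; move: eh; rewrite er; lia.
rewrite [\sum_(h <= i < r.+1) _]big_nat_recr /=; last by lia.
have -> : \sum_(h <= i < r) l i = 0.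
  rewrite big_nat_cond big1 // => e; rewrite ?andbT => /andP[a b]; rewrite /l; case: (e =P r) => [er|_]; first lia.
  by case: ifP => // ?; lia.
rewrite /l eqxx add0r sumrN.
have := geomR h n2; lra.
Qed.

Lemma Sv_upper n r : (2 <= n)%N -> (2 <= r)%N -> Sv n r <= (n ^ r)%:R.
Proof.
move=> n2 r2; have r0 : (0 < r)%N by lia.
rewrite Sv_range //.
pose q := pdiv r.
have pq : prime q by apply: pdiv_prime.
have q1 : (1 < q)%N by apply: prime_gt1.
have qr : (q %| r)%N by apply: pdiv_dvd.
pose t := (r %/ q)%N.
have tr : (t < r)%N by apply: ltn_Pdiv.
have tr' : (t %| r)%N by apply: dvdn_div.
pose u e : rat := if e == r then (n ^ r)%:R else if e == t then - (n ^ t)%:R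
   else if (e < t)%N then (n ^ e)%:R else 0.
apply: (@le_trans _ _ (\sum_(0 <= e < r.+1) u e)).
  apply: ler_sum => e _; rewrite /G.
  case: ifP => he; rewrite /u.
    case: (e =P r) => [->|ne].
      by rewrite divnn r0 moeb1 mul1r.
    have er : (e < r)%N by rewrite ltn_neqAle; apply/andP; split; [apply/eqP | rewrite dvdn_leq].
    case: (e =P t) => [et|nt].
      by rewrite et divdiv // moebp // mulN1r.
    have [_ hM] := moeb_bnd (r %/ e).
    case: ifP => et.
      by rewrite -[X in _ <= X]mul1r ler_wpM2r // ler0n.
    exfalso.
    have e0 : (0 < e)%N by move: he; case: (posnP e) => [->|//]; rewrite dvd0n => /eqP; lia.
    have h1 : (1 < r %/ e)%N by rewrite ltn_divRL // mul1n.
    have h2 : (q <= r %/ e)%N by apply: pdiv_min_dvd => //; apply: dvdn_div.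
    have h3 : (r %/ e)%N != q.
      apply/eqP => eq; apply: nt; rewrite /t -eq divdiv //.
    have h4 : (q < r %/ e)%N by rewrite ltn_neqAle eq_sym h3.
    have h5 : (e * q < r)%N.
      have := divnK he; move: h4; set z := (r %/ e)%N => h4 hz.
      rewrite -hz mulnC ltn_pmul2r //.
    by move: et; rewrite /t ltn_divRL // h5.
  case: (e =P r) => [er|_]; first by rewrite er dvdnn in he.
  case: (e =P t) => [et|_]; first by rewrite et tr' in he.
  by case: ifP => _ //; rewrite ler0n.
rewrite (big_cat_nat (leq0n t)) /=; last by lia.
rewrite (@eq_big_nat _ _ _ 0 t _ (fun e => (n ^ e)%:R)); last first.
  move=> e /andP[_ et]; rewrite /u et; case: (e =P r) => [er|_]; first lia.
  by case: (e =P t) => [ee|_] //; lia.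
have -> : \sum_(t <= i < r.+1) u i = - (n ^ t)%:R + (n ^ r)%:R.
  rewrite big_ltn //; last by lia.
  rewrite big_nat_recr /=; last by lia.
  have -> : \sum_(t.+1 <= i < r) u i = 0.
    rewrite big_nat_cond big1 // => e; rewrite ?andbT => /andP[a b]; rewrite /u.
    case: (e =P r) => [er|_]; first lia.
    case: (e =P t) => [er|_]; first lia.
    by case: ifP => // ?; lia.
  have -> : u t = - (n ^ t)%:R by rewrite /u eqxx; case: (t =P r) => //; lia.
  have -> : u r = (n ^ r)%:R by rewrite /u eqxx.
  by rewrite add0r.
have := geomR t n2; lra.
Qed.

Lemma wE n r : necklace_w n r = (r%:R)^-1 * Sv n r.
Proof. by []. Qed.

Lemma half_le r : (1 <= r)%N -> ((r./2).+1 <= r)%N.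
Proof. have := odd_double_half r; rewrite -addnn; case: (odd r) => /=; lia. Qed.

Lemma half_le2 r : (3 <= r)%N -> ((r./2).+2 <= r)%N.
Proof. have := odd_double_half r; rewrite -addnn; case: (odd r) => /=; lia. Qed.

Lemma Sv_pos n r : (2 <= n)%N -> (1 <= r)%N -> 0 < Sv n r.
Proof.
move=> n2 r1; have := Sv_lower0 n2 r1.
have : (n ^ (r./2).+1)%:R <= (n ^ r)%:R :> rat.
  by rewrite ler_nat leq_pexp2l //; [lia | apply: half_le].
lra.
Qed.

Lemma Sv_lower n r : (2 <= n)%N -> (3 <= r)%N -> (n ^ r)%:R <= 2 * Sv n r.
Proof.
move=> n2 r3; have := Sv_lower0 n2 (ltnW (ltnW r3)).
have : 2 * (n ^ (r./2).+1)%:R <= (n ^ r)%:R :> rat.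
  rewrite -natrM ler_nat; apply: (@leq_trans (n ^ (r./2).+2)).
    by rewrite [X in (_ <= X)%N]expnS leq_mul2r n2 orbT.
  by rewrite leq_pexp2l //; [lia | apply: half_le2].
lra.
Qed.

Lemma w_pos n r : (2 <= n)%N -> (1 <= r)%N -> 0 < necklace_w n r.
Proof. by move=> n2 r1; rewrite wE mulr_gt0 ?invr_gt0 ?ltr0n // Sv_pos. Qed.

Lemma w_up n r : (2 <= n)%N -> (2 <= r)%N -> necklace_w n r <= (n ^ r)%:R / r%:R.
Proof.
move=> n2 r2; rewrite wE mulrC ler_pM2r ?invr_gt0 ?ltr0n //; last by lia.
exact: Sv_upper.
Qed.

Lemma w_low n r : (2 <= n)%N -> (3 <= r)%N -> (n ^ r)%:R / (2 * r%:R) <= necklace_w n r.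
Proof.
move=> n2 r3; have r0 : (r%:R : rat) != 0 by rewrite pnatr_eq0; lia.
rewrite wE ler_pdivrMr; last by rewrite mulr_gt0 // ltr0n; lia.
have -> : (r%:R)^-1 * Sv n r * (2 * r%:R) = 2 * Sv n r by field.
exact: Sv_lower.
Qed.

Lemma coef_bound p n m k i : prime p -> (2 <= n)%N -> (1 <= m)%N -> (2 <= k)%N -> (i <= m)%N ->
  coef_a p n m k i <= 2 / ((p ^ (m - i) * k) ^ (p ^ i - 1))%:R.
Proof.
move=> pp n2 m1 k2 im.
have p2 : (2 <= p)%N by apply: prime_gt1.
set R := (p ^ (m - i) * k)%N; set s := (p ^ i)%N.
have s1 : (1 <= s)%N by rewrite expn_gt0; lia.
have R2 : (2 <= R)%N by rewrite /R; have := expn_gt0 p (m - i); nia.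
have eN : (p ^ m * k = R * s)%N.
  by rewrite /R /s mulnAC -expnD subnK.
have N3 : (3 <= R * s)%N.
  rewrite -eN; have : (p <= p ^ m)%N by rewrite -{1}(expn1 p) leq_pexp2l; lia.
  nia.
rewrite /coef_a -/R -/s eN natrX.
set X := necklace_w n R; set W := necklace_w n (R * s).
set A : rat := (n ^ R)%:R.
have X0 : 0 < X by apply: w_pos; lia.
have XA : X <= A / R%:R by apply: w_up.
have WA : A ^+ s / (2 * (R * s)%:R) <= W.
  by rewrite /A -natrX -expnM; apply: w_low.
have W0 : 0 < W by apply: w_pos; lia.
have Rr : (R%:R : rat) != 0 by rewrite pnatr_eq0; lia.
have sr : (s%:R : rat) != 0 by rewrite pnatr_eq0; lia.
have Rp : (0 : rat) < R%:R by rewrite ltr0n; lia.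
have sp : (0 : rat) < s%:R by rewrite ltr0n; lia.
rewrite ler_pdivrMr; last by rewrite mulr_gt0.
apply: (@le_trans _ _ ((A / R%:R) ^+ s)).
  apply: lerXn2r; rewrite ?nnegrE //; [exact: ltW | exact: le_trans (ltW X0) XA].
have hRs : (R%:R : rat) ^+ s = R%:R ^+ (s - 1) * R%:R.
  by rewrite -exprSr; congr (_ ^+ _); lia.
have -> : (A / R%:R) ^+ s = 2 / R%:R ^+ (s - 1) * (s%:R * (A ^+ s / (2 * (R * s)%:R))).
  rewrite expr_div_n hRs natrM; field.
  by rewrite Rr sr expf_neq0.
rewrite ler_wpM2l //; first by rewrite divr_ge0 // exprn_ge0 // ler0n.
by rewrite ler_wpM2l // ler0n.
Qed.

Lemma coef_pos p n m k i : prime p -> (2 <= n)%N -> (2 <= k)%N -> 0 < coef_a p n m k i.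
Proof.
move=> pp n2 k2; have p2 : (2 <= p)%N by apply: prime_gt1.
have h1 : forall j, (0 < p ^ j * k)%N by move=> j; rewrite muln_gt0 expn_gt0; lia.
have w1 : forall j, 0 < necklace_w n (p ^ j * k) by move=> j; apply: w_pos.
rewrite /coef_a divr_gt0 ?exprn_gt0 ?w1 // mulr_gt0 ?w1 // ltr0n expn_gt0; lia.
Qed.

Lemma coef_step p n m k i : prime p -> (2 <= n)%N -> (2 <= k)%N ->
  (1 <= i)%N -> (i <= m - 1)%N -> coef_a p n m k i <= coef_a p n m k i.-1.
Proof.
move=> pp n2 k2 i1 im; have p2 : (2 <= p)%N by apply: prime_gt1.
rewrite /coef_a.
have e1 : (m - i.-1 = (m - i).+1)%N by lia.
have e2 : (p ^ i = p * p ^ i.-1)%N by rewrite -expnS prednK.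
rewrite e1 e2 expnS -mulnA.
set R := (p ^ (m - i) * k)%N; set s := (p ^ i.-1)%N; set N := (p ^ m * k)%N.
have R2p : (2 * p <= R)%N.
  rewrite /R; have : (p <= p ^ (m - i))%N by rewrite -{1}(expn1 p) leq_pexp2l; lia.
  nia.
have RpR : (2 * p * R <= R ^ p)%N.
  have -> : (R ^ p = R ^ (p - 2) * R * R)%N by rewrite -!expnSr -addn2 subnK.
  have : (1 <= R ^ (p - 2))%N by rewrite expn_gt0; lia.
  nia.
have N1 : (1 <= N)%N by rewrite /N muln_gt0 expn_gt0; lia.
set X := necklace_w n R; set Y := necklace_w n (p * R).
set W := necklace_w n N.
set A : rat := (n ^ R)%:R.
have X0 : 0 < X by apply: w_pos; lia.
have Y0 : 0 < Y by apply: w_pos; lia.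
have W0 : 0 < W by apply: w_pos.
have XA : X <= A / R%:R by apply: w_up; lia.
have YA : A ^+ p / (2 * (p * R)%:R) <= Y.
  by rewrite /A -natrX -expnM mulnC; apply: w_low; lia.
have Rp : (0 : rat) < R%:R by rewrite ltr0n; lia.
have pp0 : (0 : rat) < p%:R by rewrite ltr0n; lia.
have sp : (0 : rat) < s%:R by rewrite ltr0n expn_gt0; lia.
have A0 : (0 : rat) < A by rewrite ltr0n expn_gt0; lia.
have XY : X ^+ p <= Y.
  apply: (@le_trans _ _ ((A / R%:R) ^+ p)).
    by apply: lerXn2r; rewrite ?nnegrE //; [exact: ltW | exact: le_trans (ltW X0) XA].
  apply: le_trans YA; rewrite expr_div_n ler_pdivrMr ?exprn_gt0 //.
  rewrite mulrAC ler_pdivlMr; last by rewrite mulr_gt0 // ltr0n; lia.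
  rewrite ler_pM2l ?exprn_gt0 // -natrX -(natrM _ 2) ler_nat mulnA; exact: RpR.
have Z0 : 0 < s%:R * W by rewrite mulr_gt0.
rewrite natrM -mulrA ler_pdivrMr; last by rewrite mulr_gt0.
have -> : Y ^+ s / (s%:R * W) * (p%:R * (s%:R * W)) = p%:R * Y ^+ s.
  by field; rewrite !gt_eqF.
rewrite exprM.
apply: (@le_trans _ _ (Y ^+ s)).
  by apply: lerXn2r => //; rewrite nnegrE ?exprn_ge0 // ltW.
rewrite ler_peMl ?exprn_ge0 ?ltW // ltr1n; lia.
Qed.

Theorem corollary2p4 (p n m k : nat) :
  prime p -> (2 <= n)%N -> (1 <= m)%N -> (2 <= k)%N -> ~~ (p %| k)%N ->
  (forall i : nat, (2 <= i)%N -> (i <= m - 1)%N ->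
     coef_a p n m k i / coef_a p n m k i.-1 <= 1)
  /\ coef_a p n m k 1 <= 2 / ((p ^ (m - 1) * k) ^ (p - 1))%:R
  /\ coef_a p n m k m <= 2 / (k ^ (p ^ m - 1))%:R.
Proof.
move=> pp n2 m1 k2 _; split; [|split].
- move=> i i2 im; rewrite ler_pdivrMr ?coef_pos // mul1r.
  apply: coef_step => //; lia.
- by have := coef_bound pp n2 m1 k2 m1; rewrite expn1.
- by have := coef_bound pp n2 m1 k2 (leqnn m); rewrite subnn expn0 mul1n.
Qed.
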